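(* Let $M,N,K$ be positive integers, $s$ a non-negative integer, $X\in\mathbb{R}^{N\times K}$ an $s$-row sparse matrix, and $A\in\mathbb{R}^{M\times N}$. Let $Y=AX$ and $r=\operatorname{rank}(Y)$, and suppose the map $Z\mapsto AZ$ is injective on $\Sigma_{s,r}$. Then: (i) $Y$ can be written as a product $Y=VU$ where $V\in\mathbb{R}^{M\times r}$ with $\operatorname{rank}(V)=r$ and $U\in\mathbb{R}^{r\times K}$ with $UU^T=I_r$ (the $r\times r$ identity matrix); (ii) for any such factorization $Y=VU$, the problem $\operatorname{argmin}_{Z\in\mathbb{R}^{N\times r}}\|Z\|_0$ subject to $AZ=V$ has a unique solution $W\in\mathbb{R}^{N\times r}$, and this $W$ is $s$-row sparse and has full column rank; (iii) $X=WU$.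
   Context: A matrix in $\mathbb{R}^{N\times K}$ is called $s$-row sparse if at most $s$ of its rows are non-zero. $\Sigma_{s,r}$ denotes the set of all $s$-row sparse matrices in $\mathbb{R}^{N\times K}$ of rank at least $r$. For a matrix $Z$, $\|Z\|_0$ denotes the number of non-zero rows of $Z$. *)

(* Defs.v *)
From HB Require Import structures.
From mathcomp Require Import all_boot all_order all_algebra.
From mathcomp Require Import reals.
Set Implicit Arguments. Unset Strict Implicit. Unset Printing Implicit Defensive.
Import GRing.Theory Num.Theory.
Local Open Scope ring_scope.

Definition nzrows (R : ringType) (m n : nat) (Z : 'M[R]_(m, n)) : nat :=
  #|[set i : 'I_m | row i Z != 0]|.

Definition row_sparse (R : ringType) (m n : nat) (s : nat) (Z : 'M[R]_(m, n)) : Prop :=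
  (nzrows Z <= s)%N.

Definition Sigma (F : fieldType) (m n : nat) (s r : nat) (Z : 'M[F]_(m, n)) : Prop :=
  row_sparse s Z /\ (r <= \rank Z)%N.

Definition l0_argmin (R : ringType) (m n k : nat) (A : 'M[R]_(m, n))
  (V : 'M[R]_(m, k)) (W : 'M[R]_(n, k)) : Prop :=
  A *m W = V /\ forall Z : 'M[R]_(n, k), A *m Z = V -> (nzrows W <= nzrows Z)%N.

(* Main.v *)
Require Import Defs.
From HB Require Import structures.
From mathcomp Require Import all_boot all_order all_algebra.
From mathcomp Require Import reals.
Import GRing.Theory Num.Theory.
Local Open Scope ring_scope.
Import Order.TTheory.
Lemma sumsq_pos (R : realFieldType) K (v : 'rV[R]_K) : v != 0 -> 0 < (v *m v^T) 0 0.
Proof.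
move=> vn0; rewrite mxE.
under eq_bigr do rewrite mxE -expr2.
rewrite lt_def; apply/andP; split; last by apply: sumr_ge0 => j _; rewrite sqr_ge0.
apply/negP => /eqP/eqP; rewrite psumr_eq0; last by move=> j _; rewrite sqr_ge0.
move=> /allP H; apply/negP: vn0; rewrite negbK; apply/eqP/rowP => j.
have := H j (mem_index_enum _); rewrite sqrf_eq0 => /eqP ->.
by rewrite !mxE.

Qed.

Lemma gs (R : rcfType) K k (B : 'M[R]_(k, K)) : row_free B ->
  exists U : 'M[R]_(k, K), U *m U^T = 1%:M /\ (B <= U)%MS.
Proof.
elim: k B => [|k IH] B fB.
  exists 0; split; first by rewrite !flatmx0.
  by rewrite flatmx0 sub0mx.
pose B' : 'M[R]_(1 + k, K) := B.
pose w := usubmx B'. pose b := dsubmx B'.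
have eB : B = col_mx w b by rewrite vsubmxK.
have rB : \rank (col_mx w b) = k.+1 by rewrite -eB; apply/eqP.
have rk : (\rank (col_mx w b) <= 1 + \rank b)%N.
  rewrite -(addsmxE w b).
  apply: leq_trans (mxrank_adds_leqif w b).1 _.
  by rewrite leq_add2r rank_leq_row.
have fb : row_free b.
  rewrite /row_free eqn_leq rank_leq_row /=.
  by move: rk; rewrite rB.
have [U' [HU' sbU']] := IH b fb.
pose v := w - w *m U'^T *m U'.
have vn0 : v != 0.
  apply/eqP => v0.
  have wU : (w <= U')%MS.
    have -> : w = w *m U'^T *m U' by apply/eqP; rewrite -subr_eq0; apply/eqP.
    exact: submxMl.
  have : (col_mx w b <= U')%MS by rewrite col_mx_sub wU sbU'.
  move/mxrankS; rewrite rB => H.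
  by have := leq_trans H (rank_leq_row U'); rewrite ltnn.
have vU : v *m U'^T = 0.
  by rewrite /v mulmxBl -!mulmxA HU' mulmx1 subrr.
pose n := (v *m v^T) 0 0.
have n0 : 0 < n by apply: sumsq_pos.
pose c := (Num.sqrt n)^-1.
pose u := c *: v.
have sq0 : Num.sqrt n != 0 by rewrite sqrtr_eq0 -ltNge.
have uu : u *m u^T = 1%:M.
  rewrite /u linearZ /= -scalemxAl -scalemxAr scalerA (mx11_scalar (v *m v^T)) -/n.
  rewrite scale_scalar_mx; congr (_%:M); rewrite /c -expr2 exprVn sqr_sqrtr ?ltW //.
  by rewrite mulVf // gt_eqF.
have uU : u *m U'^T = 0 by rewrite /u -scalemxAl vU scaler0.
exists (col_mx u U'); split.
  change (col_mx u U' *m (col_mx u U')^T = (1%:M : 'M[R]_(1 + k))).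
  rewrite tr_col_mx mul_col_row uu uU HU'.
  have -> : U' *m u^T = 0 by rewrite -(trmxK U') -trmx_mul uU trmx0.
  by rewrite (scalar_mx_block 1 k (1 : R)).
change (B' <= col_mx u U')%MS.
have eB' : B' = col_mx w b by rewrite vsubmxK.
rewrite eB' col_mx_sub; apply/andP; split; last first.
  by apply: submx_trans sbU' _; rewrite -(addsmxE u U') addsmxSr.
have -> : w = v + w *m U'^T *m U' by rewrite /v subrK.
apply: addmx_sub.
  have -> : v = Num.sqrt n *: u by rewrite /u scalerA mulfV // scale1r.
  by apply: scalemx_sub; rewrite -(addsmxE u U') addsmxSl.
apply: submx_trans (submxMl _ _) _.
by rewrite -(addsmxE u U') addsmxSr.
Qed.

Lemma projU (F : fieldType) m k n (Y : 'M[F]_(m, n)) (U : 'M[F]_(k, n)) :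
  U *m U^T = 1%:M -> (Y <= U)%MS -> Y *m U^T *m U = Y.
Proof.
move=> HU YU; rewrite -{1}(mulmxKpV YU).
set P := Y *m pinvmx U.
by rewrite -(mulmxA P U U^T) HU mulmx1 /P mulmxKpV.
Qed.

Lemma nzrowsM (R : ringType) m n p (Z : 'M[R]_(m, n)) (P : 'M[R]_(n, p)) :
  (nzrows (Z *m P) <= nzrows Z)%N.
Proof.
apply: subset_leq_card; apply/subsetP => i; rewrite !inE row_mul.
by apply: contra => /eqP ->; rewrite mul0mx.
Qed.
Theorem theorem4 (R : realType) (M N K s : nat)
  (X : 'M[R]_(N, K)) (A : 'M[R]_(M, N)) :
  (0 < M)%N -> (0 < N)%N -> (0 < K)%N ->
  row_sparse s X ->
  (forall Z1 Z2 : 'M[R]_(N, K),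
      Sigma s (\rank (A *m X)) Z1 -> Sigma s (\rank (A *m X)) Z2 ->
      A *m Z1 = A *m Z2 -> Z1 = Z2) ->
  (exists (V : 'M[R]_(M, \rank (A *m X))) (U : 'M[R]_(\rank (A *m X), K)),
      \rank V = \rank (A *m X) /\ U *m U^T = 1%:M /\ A *m X = V *m U)
  /\
  (forall (V : 'M[R]_(M, \rank (A *m X))) (U : 'M[R]_(\rank (A *m X), K)),
      \rank V = \rank (A *m X) -> U *m U^T = 1%:M -> A *m X = V *m U ->
      exists W : 'M[R]_(N, \rank (A *m X)),
        l0_argmin A V W
        /\ (forall W' : 'M[R]_(N, \rank (A *m X)), l0_argmin A V W' -> W' = W)
        /\ row_sparse s W
        /\ \rank W = \rank (A *m X)
        /\ X = W *m U).
Proof.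
move=> _ _ _ sX inj.
set r := \rank (A *m X).
have rXr : (r <= \rank X)%N by apply: mxrankM_maxr.
split.
  have [U [HU sU]] := @gs _ _ _ _ (row_base_free (A *m X)).
  have YU : (A *m X <= U)%MS by rewrite -(eq_row_base (A *m X)).
  have eY : A *m X *m U^T *m U = A *m X.
    exact: projU HU YU.
  exists (A *m X *m U^T), U; split; last by split.
  apply/eqP; rewrite eqn_leq mxrankM_maxl /=.
  by rewrite /r -{1}eY mxrankM_maxl.
move=> V U rV HU eY.
have eV : A *m X *m U^T = V by rewrite eY -mulmxA HU mulmx1.
have g : forall Z, A *m Z = V -> (nzrows Z <= s)%N -> Z *m U = X.
  move=> Z AZ sZ; apply: inj; last by rewrite mulmxA AZ.
    split; first by apply: leq_trans (nzrowsM _ _ _ _ _ _) sZ.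
    have h := mxrankM_maxr A (Z *m U); rewrite mulmxA AZ -eY in h; exact: h.
  by split.
pose W := X *m U^T.
have AW : A *m W = V by rewrite mulmxA.
have sW : (nzrows W <= s)%N by apply: leq_trans (nzrowsM _ _ _ _ _ _) sX.
have e : forall Z, A *m Z = V -> (nzrows Z <= s)%N -> Z = W.
  move=> Z AZ sZ; rewrite /W -(g Z AZ sZ) -mulmxA HU mulmx1 //.
exists W; split.
  split => // Z AZ; case: (leqP (nzrows W) (nzrows Z)) => // lt.
  by have := e Z AZ (leq_trans (ltnW lt) sW) => eZ; move: lt; rewrite eZ ltnn.
split.
  by move=> W' [AW' mW']; apply: e => //; apply: leq_trans (mW' W AW) sW.
split => //; split; last by rewrite (g W AW sW).
apply/eqP; rewrite eqn_leq rank_leq_col /=.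
have h := mxrankM_maxr A W; rewrite AW rV in h; exact: h.
Qed.
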